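(* Let $X$ be a finite set, $t_1<\dots<t_M$ real numbers and $(\mathcal{P}^{t_m})_{m\le M}$ partitions of $X$ with Multiscale Clustering Filtration $(K^{t_m})_{m\le M}$, and let $K:=K^{t_M}$. For every integer $1\le k\le\dim(K)-1$: (i) $c_k(t_1)=b_k(t_1)$ and $c_k(t_m)=\beta_k^{t_m}-\beta_k^{t_{m-1}}$ for $2\le m\le M$; (ii) $\beta_k^{t_m}=\sum_{l=1}^m c_k(t_l)$ for all $1\le m\le M$.
   Context: A partition of $X$ is a collection of non-empty pairwise disjoint subsets (clusters) whose union is $X$. For a finite non-empty set $C$, $\Delta C$ is the set of all non-empty subsets of $C$. The MCF is $K^{t_m}:=\bigcup_{l\le m}\bigcup_{C\in\mathcal{P}^{t_l}}\Delta C$ for $1\le m\le M$, with $K^{t_0}:=\emptyset$. $\dim(K)$ is the maximal dimension of a simplex in $K$. Homology is simplicial homology over $\mathbb{Z}_2$; $\beta_k^{t_m}$ is the dimension of $H_k(K^{t_m})$. For $0\le i\le j\le M$ let $\beta_k^{i,j}$ be the rank of the map $H_k(K^{t_i})\to H_k(K^{t_j})$ induced by inclusion. For $1\le i<j\le M$, $\mu_k^{t_i,t_j}:=\beta_k^{i,j-1}-\beta_k^{i,j}-\beta_k^{i-1,j-1}+\beta_k^{i-1,j}$ is the number of independent $k$-dimensional classes born at index $i$ and dying at index $j$, and $\mu_k^{t_i,\infty}:=\beta_k^{i,M}-\beta_k^{i-1,M}$ is the number born at index $i$ that never die. Define $b_k(t_m):=\sum_{l=m+1}^M\mu_k^{t_m,t_l}+\mu_k^{t_m,\infty}$,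 $d_k(t_m):=\sum_{l=1}^{m-1}\mu_k^{t_l,t_m}$, and the persistent conflict $c_k(t_m):=b_k(t_m)-d_k(t_m)$. *)

(* Defs.v *)
From HB Require Import structures.
From mathcomp Require Import all_boot all_order all_algebra.
Set Implicit Arguments. Unset Strict Implicit. Unset Printing Implicit Defensive.
Import Order.TTheory GRing.Theory Num.Theory.

Section Homology.
Variable X : finType.

(* Chains: row vectors over 'F_2 indexed by all subsets of X. *)
Definition nS := #|{set X}|.
Definition sv (i : 'I_nS) : {set X} := enum_val i.

Definition Delta (C : {set X}) : {set {set X}} := powerset C :\ set0.

Definition dimK (K : {set {set X}}) : nat := (\max_(s in K) #|s|).-1.

(* boundary operator: a simplex s (with #|s| >= 2) is sent to the sum of its
   codimension-one faces; vertices have boundary 0 (unreduced homology). *)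
Definition bd : 'M['F_2]_(nS, nS) :=
  \matrix_(i, j) ((sv j \subset sv i)
                  && (#|sv j|.+1 == #|sv i|)%N
                  && (0 < #|sv j|)%N)%:R%R.

(* C_k(K): span of the indicator vectors of the k-simplices of K *)
Definition chains (K : {set {set X}}) (k : nat) : 'M['F_2]_(nS, nS) :=
  \matrix_(i, j) ((i == j) && (sv i \in K) && (#|sv i| == k.+1)%N)%:R%R.

Definition cycles (K : {set {set X}}) (k : nat) :=
  (chains K k :&: kermx bd)%MS.

Definition boundaries (K : {set {set X}}) (k : nat) : 'M['F_2]_(nS, nS) :=
  (chains K k.+1 *m bd)%R.

Definition betti (K : {set {set X}}) (k : nat) : nat :=
  \rank (cycles K k) - \rank (boundaries K k).

(* rank of H_k(K) -> H_k(K') induced by inclusion K <= K':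
   its image is (Z_k(K) + B_k(K')) / B_k(K'). *)
Definition pers_betti (K K' : {set {set X}}) (k : nat) : nat :=
  \rank (cycles K k + boundaries K' k)%MS - \rank (boundaries K' k).

Section MCF.
Variable P : nat -> {set {set X}}.   (* P m = partition at time t_m, 1 <= m *)
Variable M : nat.

Definition MCF (m : nat) : {set {set X}} :=
  \bigcup_(1 <= l < m.+1) \bigcup_(C in P l) Delta C.

Definition pbetti (k i j : nat) : int := (pers_betti (MCF i) (MCF j) k)%:Z.

Definition mu (k i j : nat) : int :=
  (pbetti k i j.-1 - pbetti k i j - pbetti k i.-1 j.-1 + pbetti k i.-1 j)%R.

Definition mu_inf (k i : nat) : int := (pbetti k i M - pbetti k i.-1 M)%R.

Definition birth (k m : nat) : int :=
  (\sum_(m.+1 <= l < M.+1) mu k m l + mu_inf k m)%R.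

Definition death (k m : nat) : int := (\sum_(1 <= l < m) mu k l m)%R.

Definition conflict (k m : nat) : int := (birth k m - death k m)%R.

End MCF.
End Homology.

(* Main.v *)
Require Import Defs.
From HB Require Import structures.
From mathcomp Require Import all_boot all_order all_algebra.
From mathcomp Require Import zify ring.
Import Order.TTheory GRing.Theory Num.Theory.
Local Open Scope ring_scope.

Section A.
Variable X : finType.

Lemma sum_sv (F : {set X} -> 'F_2) :
  \sum_(u : 'I_(nS X)) F (sv u) = \sum_(S : {set X}) F S.
Proof.
rewrite (reindex (@sv X)) //.
apply: onW_bij. apply: (Bijective (g := @enum_rank _)) => x; rewrite /sv.
- exact: enum_valK.
- exact: enum_rankK.
Qed.

Lemma F2_2 : (2%:R : 'F_2) = 0. Proof. by have /andP[_ /eqP] := @pchar_Fp 2 isT. Qed.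

Lemma bd_bd : bd X *m bd X = 0.
Proof.
apply/matrixP => i j; rewrite !mxE.
set I := sv i; set J := sv j.
under eq_bigr => u _ do rewrite !mxE -natrM mulnb.
rewrite (sum_sv (fun S => ((S \subset I) && (#|S|.+1 == #|I|)%N && (0 < #|S|)%N && 
   ((J \subset S) && (#|J|.+1 == #|S|)%N && (0 < #|J|)%N))%:R)).
rewrite -natr_sum.
pose c := (fun S : {set X} => [&& (S \subset I) && (#|S|.+1 == #|I|)%N && (0 < #|S|)%N,
          (J \subset S) && (#|J|.+1 == #|S|)%N & (0 < #|J|)%N]).
rewrite -/(\sum_S (c S : nat))%N.
have -> : (\sum_S c S = #|[set S | c S]|)%N.
  by rewrite -sum1_card [RHS]big_mkcond; apply: eq_bigr => S _; rewrite inE; case: (c S).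
have [h|h] := boolP [&& J \subset I, #|I| == #|J|.+2 & (0 < #|J|)%N]; last first.
  suff -> : [set S | c S] = set0 by rewrite cards0.
  apply/setP => S; rewrite !inE /c; apply/negP.
  case/and3P => /andP[/andP[SI /eqP eI] _] /andP[JS /eqP eJ] J0.
  by apply: (negP h); rewrite (subset_trans JS SI) J0 -eI -eJ eqxx.
case/and3P: h => JI /eqP eIJ J0.
have -> : [set S | c S] = [set x |: J | x in I :\: J].
  apply/setP => S; rewrite inE /c; apply/idP/imsetP.
    case/and3P => /andP[/andP[SI /eqP eI] _] /andP[JS /eqP eJ] _.
    have : #|S :\: J| == 1%N by rewrite cardsD (setIidPr JS) -eJ subSnn.
    case/cards1P => x Sx.
    have xS : x \in S :\: J by rewrite Sx set11.
    exists x; first by move: xS; rewrite !inE => /andP[-> /(subsetP SI) ->].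
    apply/setP => y; rewrite in_setU1; case yJ: (y \in J).
      by rewrite orbT (subsetP JS).
    by rewrite orbF -in_set1 -Sx !inE yJ.
  case=> x; rewrite inE => /andP[xJ xI] ->.
  rewrite subUset sub1set xI JI subsetUr cardsU1 xJ /= eIJ !eqxx.
  by rewrite J0.
rewrite card_in_imset.
  rewrite cardsD (setIidPr JI) eIJ.
  have -> : (#|J|.+2 - #|J| = 2)%N by lia.
  exact: F2_2.
move=> x y; rewrite !inE => /andP[xJ _] /andP[yJ _] /setP /(_ x).
by rewrite !inE eqxx /= (negbTE xJ) orbF => /esym/eqP.
Qed.

Definition dclosed (K : {set {set X}}) :=
  forall s t : {set X}, s \in K -> t \subset s -> t != set0 -> t \in K.

Lemma dclosed0 : dclosed set0.
Proof. by move=> s t; rewrite inE. Qed.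

Lemma dclosedU A B : dclosed A -> dclosed B -> dclosed (A :|: B).
Proof.
move=> dA dB s t; rewrite !inE => /orP[sA|sB] ts t0.
  by rewrite (dA s) //.
by rewrite (dB s) // orbT.
Qed.

Lemma dclosedD C : dclosed (Delta C).
Proof.
move=> s t; rewrite /Delta !inE => /andP[_ sC] ts ->.
exact: subset_trans ts sC.
Qed.

Lemma MCF_dclosed (P : nat -> {set {set X}}) m : dclosed (MCF P m).
Proof.
rewrite /MCF; apply: big_ind; [exact: dclosed0|exact: dclosedU|move=> l _].
apply: big_ind; [exact: dclosed0|exact: dclosedU|move=> C _; exact: dclosedD].
Qed.

Lemma chainsE (K : {set {set X}}) k : chains K k =
  diag_mx (\row_(i < nS X) ((sv i \in K) && (#|sv i| == k.+1)%N)%:R).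
Proof.
apply/matrixP => i j; rewrite !mxE; case: eqVneq => [->|] /=; first by rewrite mulr1n.
by rewrite mulr0n.
Qed.

Lemma bnd_sub K k : dclosed K -> (boundaries K k <= chains K k)%MS.
Proof.
move=> dK; rewrite /boundaries.
have -> : chains K k.+1 *m bd X = chains K k.+1 *m bd X *m chains K k.
  rewrite !chainsE mul_diag_mx mul_mx_diag; apply/matrixP => i j; rewrite !mxE.
  case h1: (sv i \in K); case h2: (#|sv i| == k.+2)%N; rewrite ?mul0r //=.
  case h3: (sv j \subset sv i); case h4: (#|sv j|.+1 == #|sv i|)%N;
    case h5 : (0 < #|sv j|)%N; rewrite /= ?mulr0 ?mul0r //.
  have -> : sv j \in K.
    apply: (dK _ _ h1 h3); by rewrite -card_gt0 h5.
  by move/eqP: h2 => h2; move/eqP: h4; rewrite h2 => -[->]; rewrite eqxx !mulr1.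
exact: submxMl.
Qed.

Lemma bnd_cyc K k : dclosed K -> (boundaries K k <= cycles K k)%MS.
Proof.
move=> dK; rewrite sub_capmx bnd_sub //= sub_kermx /boundaries.
by rewrite -mulmxA bd_bd mulmx0.
Qed.

Lemma betti_pers K k : dclosed K -> pers_betti K K k = betti K k.
Proof. by move=> dK; rewrite /pers_betti /betti (addsmx_idPl (bnd_cyc K k dK)). Qed.

Lemma MCF0 (P : nat -> {set {set X}}) : MCF P 0 = set0.
Proof. by rewrite /MCF big_geq. Qed.

Lemma pers0 (P : nat -> {set {set X}}) K k : pers_betti (MCF P 0) K k = 0%N.
Proof.
rewrite /pers_betti /cycles MCF0.
have -> : chains (set0 : {set {set X}}) k = 0.
  by apply/matrixP => i j; rewrite !mxE inE andbF.
by rewrite cap0mx adds0mx subnn.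
Qed.

Variable P : nat -> {set {set X}}.
Variable k : nat.
Local Notation p := (pbetti P k).

Lemma p0 j : p 0 j = 0.
Proof. by rewrite /pbetti pers0. Qed.

Lemma pmm m : p m m = (betti (MCF P m) k)%:Z.
Proof. by rewrite /pbetti betti_pers //; exact: MCF_dclosed. Qed.

Lemma sum_mu_r i m n : (m <= n)%N ->
  \sum_(m.+1 <= l < n.+1) mu P k i l = p i m - p i n - (p i.-1 m - p i.-1 n).
Proof.
elim: n => [|n IH] hmn.
  by move: hmn; rewrite leqn0 => /eqP ->; rewrite big_geq // !subrr.
case: (ltngtP m n.+1) hmn => // [hlt|->] _; last by rewrite big_geq // !subrr.
rewrite big_nat_recr //= IH // /mu /=; ring.
Qed.

Lemma sum_mu_l j m :
  \sum_(1 <= l < m.+1) mu P k l j = p m j.-1 - p 0 j.-1 - p m j + p 0 j.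
Proof.
elim: m => [|m IH]; first by rewrite big_geq //; ring.
rewrite big_nat_recr //= IH /mu /=; ring.
Qed.

Lemma conflict_eq M m : (1 <= m <= M)%N ->
  conflict P M k m = (betti (MCF P m) k)%:Z - (betti (MCF P m.-1) k)%:Z.
Proof.
case/andP=> h1 h2; rewrite /conflict /birth /death /mu_inf sum_mu_r //.
case: m h1 h2 => // m _ h2; rewrite sum_mu_l /= !p0 !pmm; ring.
Qed.

End A.


Local Close Scope ring_scope.

Theorem proposition5 (X : finType) (R : realFieldType) (M : nat)
  (t : nat -> R) (P : nat -> {set {set X}})
  (ht : forall m, 1 <= m -> m < M -> (t m < t m.+1)%R)
  (hP : forall m, 1 <= m <= M -> partition (P m) [set: X])
  (k : nat) (hk1 : 1 <= k) (hk2 : k <= (dimK (MCF P M)).-1) :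
  (conflict P M k 1 = birth P M k 1 /\
   forall m, 2 <= m <= M ->
     conflict P M k m =
       ((betti (MCF P m) k)%:Z%R - (betti (MCF P m.-1) k)%:Z%R)%R)
  /\
  (forall m, 1 <= m <= M ->
     (betti (MCF P m) k)%:Z%R = (\sum_(1 <= l < m.+1) conflict P M k l)%R).
Proof.
have b0 : betti (MCF P 0) k = 0%N.
  by rewrite -betti_pers ?pers0 //; exact: MCF_dclosed.
split; first split.
- by rewrite /conflict /death big_geq // GRing.subr0.
- move=> m /andP[h2 hM]; apply: conflict_eq; rewrite hM andbT; exact: ltnW.
have key : forall m, (m <= M)%N ->
    ((betti (MCF P m) k)%:Z = \sum_(1 <= l < m.+1) conflict P M k l)%R.
  elim=> [|m IH] hm; first by rewrite big_geq // b0.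
  rewrite big_nat_recr //= -IH ?(ltnW hm) // conflict_eq ?hm //=; ring.
by move=> m /andP[_ hm]; exact: key.
Qed.
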